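(* Let $N_s,\beta,\varepsilon$ be positive integers, $P_b\in(0,1]$, and for $0\le j\le N_s-1$ let $N(j)=N_s-j$, $\gamma(j)=N(j)-\beta$, $\hat{\varepsilon}(j)=\min\{\gamma(j),\varepsilon\}$ (when $\gamma(j)\ge 0$), and $P_W(j)=(1-P_b)^jP_b$. Consider an ED $\mathrm{E}'$ whose wake-up slot $W$ satisfies $P(W=j)=P_W(j)$ for $0\le j\le N_s-1$ (with the remaining probability it never wakes up and transmits nothing), and which, after waking up, transmits according to one of the two schemes described in the context. Then for every slot $s\in\{0,\dots,N_s-1\}$, the probability that $\mathrm{E}'$ transmits a frame in slot $s$ is \[ P_{\mathrm{col}}(s)=\sum_{j=0}^{\min\{N_s-\beta-y,\,s\}}\frac{\beta+r_j}{N(j)}P_W(j)\;+\;\theta_s\sum_{j=N_s-\beta-y+1}^{s}\min\left\{\frac{\beta}{N(j)},1\right\}P_W(j), \] where $r_j=y=\varepsilon$ for the fountain-coding scheme, $r_j=\hat{\varepsilon}(j)$ and $y=0$ for the message-replication scheme, $\theta_s=1$ if $s>N_s-\beta-y$ and $\theta_s=0$ otherwise, and empty sums are zero.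
   Context: An ED has $\beta$ messages to deliver to a UAV during a session of $N_s$ slots (numbered $0,\dots,N_s-1$). An ED waking in slot $i$ may use only the $N(i)=N_s-i$ slots $i,\dots,N_s-1$, transmitting at most one frame per slot; $\varepsilon\ge 1$ is a design parameter. Whenever the ED has $K\le N(i)$ frames to send, it places them in $K$ distinct slots chosen uniformly at random among the $N(i)$ available slots. Fountain-coding scheme: if $\gamma(i)\ge\varepsilon$, the ED sends $\beta+\varepsilon$ coded frames in $\beta+\varepsilon$ uniformly random distinct available slots; if $\gamma(i)<\varepsilon$ and $\beta\le N(i)$, it sends its $\beta$ uncoded messages in $\beta$ uniformly random distinct available slots; if $\beta>N(i)$, it sends $N(i)$ randomly selected messages, one in each available slot. Message-replication scheme: if $\gamma(i)\ge 0$, the ED sends $\beta+\hat{\varepsilon}(i)$ frames (message replicas) in $\beta+\hat{\varepsilon}(i)$ uniformly random distinct available slots; if $\gamma(i)<0$, it sends $N(i)$ randomly selected messages, one in each available slot. *)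

(* Defs.v *)
(* Discrete probability model of the ED E' on a finite
   outcome space: (wake-up slot or None) x (set of slots used). *)
From HB Require Import structures.
From mathcomp Require Import all_boot all_order all_algebra.
Unset Printing Implicit Defensive.
Import Order.TTheory GRing.Theory Num.Theory.
Local Open Scope ring_scope.

Inductive scheme := Fountain | Replication.

Definition Nav (Ns j : nat) : nat := (Ns - j)%N.

Definition nframes (sc : scheme) (Ns beta eps j : nat) : nat :=
  let N := Nav Ns j in
  match sc with
  | Fountain =>
      (* gamma(j) >= eps  <->  N >= beta + eps *)
      if (beta + eps <= N)%N then (beta + eps)%N
      else if (beta <= N)%N then beta else N
  | Replication =>
      (* gamma(j) >= 0 <-> N >= beta ; eps_hat(j) = min(gamma(j), eps) *)
      if (beta <= N)%N then (beta + minn (N - beta) eps)%N else N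
  end.

Definition PW {R : realFieldType} (Pb : R) (j : nat) : R := (1 - Pb) ^+ j * Pb.

Definition avail (Ns : nat) (j : 'I_Ns) : {set 'I_Ns} := [set i : 'I_Ns | (j <= i)%N].

Definition placements (sc : scheme) (Ns beta eps : nat) (j : 'I_Ns) : {set {set 'I_Ns}} :=
  [set S : {set 'I_Ns} | (S \subset @avail Ns j) && (#|S| == nframes sc Ns beta eps j)].

Definition outcome_prob {R : realFieldType} (sc : scheme) (Ns beta eps : nat) (Pb : R)
    (o : option 'I_Ns * {set 'I_Ns}) : R :=
  match o.1 with
  | Some j => PW Pb j *
      (if o.2 \in placements sc Ns beta eps j
       then (#|placements sc Ns beta eps j|%:R)^-1 else 0)
  | None => (1 - \sum_(j < Ns) PW Pb j) * (if o.2 == set0 then 1 else 0)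
  end.

Definition P_tx {R : realFieldType} (sc : scheme) (Ns beta eps : nat) (Pb : R)
    (s : 'I_Ns) : R :=
  \sum_(o : option 'I_Ns * {set 'I_Ns} | s \in o.2) outcome_prob sc Ns beta eps Pb o.

Definition r_j (sc : scheme) (Ns beta eps j : nat) : nat :=
  match sc with Fountain => eps | Replication => minn (Nav Ns j - beta) eps end.
Definition y_of (sc : scheme) (eps : nat) : nat :=
  match sc with Fountain => eps | Replication => 0%N end.

Definition P_col {R : realFieldType} (sc : scheme) (Ns beta eps : nat) (Pb : R)
    (s : nat) : R :=
  let L : int := (Ns%:Z - beta%:Z - (y_of sc eps)%:Z)%R in
  let theta : R := if (L < s%:Z)%R then 1 else 0 in
  \sum_(j < Ns | (j%:Z <= Num.min L s%:Z)%R)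
     ((beta + r_j sc Ns beta eps j)%:R / (Nav Ns j)%:R) * PW Pb j
  + theta * \sum_(j < Ns | (L + 1 <= j%:Z)%R && (j <= s)%N)
     Num.min (beta%:R / (Nav Ns j)%:R) 1 * PW Pb j.

(* Main.v *)
Require Import Defs.
From HB Require Import structures.
From mathcomp Require Import all_boot all_order all_algebra.
From mathcomp Require Import zify ring lra.
Import Order.TTheory GRing.Theory Num.Theory.
Local Open Scope ring_scope.

Lemma card_avail Ns (j : 'I_Ns) : #|avail Ns j| = (Ns - j)%N.
Proof.
rewrite /avail.
have -> : [set i : 'I_Ns | (j <= i)%N] = ~: [set i : 'I_Ns | (i < j)%N].
  by apply/setP=> i; rewrite !inE -leqNgt.
rewrite cardsCs setCK card_ord.
congr (_ - _)%N.
have hj : (j <= Ns)%N by apply: ltnW.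
have -> : [set i : 'I_Ns | (i < j)%N] = (widen_ord hj) @: [set: 'I_j].
  apply/setP=> i; rewrite inE; apply/idP/imsetP.
    move=> lij; exists (Ordinal lij) => //; exact: val_inj.
  by case=> i' _ ->; rewrite /= ltn_ord.
by rewrite card_imset ?cardsT ?card_ord //; by move=> a b /(congr1 val) /= /val_inj.
Qed.

Lemma card_contain (T : finType) (A : {set T}) (x : T) (k : nat) :
  x \in A -> (0 < k)%N ->
  #|[set S : {set T} | (S \subset A) && (#|S| == k) & x \in S]| = 'C(#|A|.-1, k.-1).
Proof.
move=> xA k0.
have -> : [set S : {set T} | (S \subset A) && (#|S| == k) & x \in S] =
  (fun S' : {set T} => x |: S') @: [set S' : {set T} | S' \subset A :\ x & #|S'| == k.-1].
  apply/setP=> S; apply/idP/idP.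
  - rewrite !inE => /andP[/andP[SA /eqP cS] xS].
    apply/imsetP; exists (S :\ x).
      rewrite inE; apply/andP; split; first by apply: setSD.
      by rewrite (cardsD1 x S) xS in cS; rewrite -cS.
    by rewrite setD1K.
  - case/imsetP=> S'; rewrite inE => /andP[S'A /eqP cS'] ->.
    rewrite !inE eqxx orTb andbT.
    have xS' : x \notin S'.
      by apply/negP=> /(subsetP S'A); rewrite !inE eqxx.
    rewrite subUset sub1set xA /=.
    rewrite (subset_trans S'A) ?subsetDl //=.
    by rewrite cardsU1 xS' cS' add1n prednK.
rewrite card_in_imset.
  by rewrite cards_draws (cardsD1 x A) xA.
move=> S1 S2; rewrite !inE => /andP[S1A _] /andP[S2A _] e.
have n1 : x \notin S1 by apply/negP=> /(subsetP S1A); rewrite !inE eqxx.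
have n2 : x \notin S2 by apply/negP=> /(subsetP S2A); rewrite !inE eqxx.
by rewrite -(setU1K n1) -(setU1K n2) e.
Qed.

Lemma nframes_bnd sc Ns beta eps (j : 'I_Ns) : (0 < beta)%N ->
  (0 < nframes sc Ns beta eps j <= Nav Ns j)%N.
Proof.
move=> hb; have hj := ltn_ord j; rewrite /nframes /Nav.
case: sc; repeat case: ifP; lia.
Qed.

Lemma ratio (R : realFieldType) (T : finType) (A : {set T}) (x : T) (k : nat) :
  (0 < k <= #|A|)%N ->
  (#|[set S : {set T} | (S \subset A) && (#|S| == k) & x \in S]|%:R
   / #|[set S : {set T} | (S \subset A) && (#|S| == k)]|%:R : R)
  = if x \in A then k%:R / #|A|%:R else 0.
Proof.
case/andP=> k0 kA.
case: ifP => xA.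
  rewrite card_contain // cards_draws.
  have nz : 'C(#|A|, k) != 0%N by rewrite -lt0n bin_gt0.
  have nA : #|A| != 0%N by lia.
  have e := mul_bin_diag #|A| k.-1.
  rewrite prednK // in e.
  apply/eqP; rewrite eqr_div ?pnatr_eq0 //.
  by rewrite -!natrM mulnC e mulnC.
have -> : [set S : {set T} | (S \subset A) && (#|S| == k) & x \in S] = set0.
  apply/setP=> S; rewrite !inE; apply/negP=> /andP[/andP[/subsetP SA _] xS].
  by rewrite (SA _ xS) in xA.
by rewrite cards0 mul0r.
Qed.

Lemma Ptx_eq (R : realFieldType) sc Ns beta eps (Pb : R) (s : 'I_Ns) :
  (0 < beta)%N ->
  P_tx sc Ns beta eps Pb s = \sum_(j < Ns) PW Pb j *
     (if (j <= s)%N then (nframes sc Ns beta eps j)%:R / (Nav Ns j)%:R else 0).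
Proof.
move=> hb.
rewrite /P_tx.
rewrite (eq_bigr (fun o => outcome_prob sc Ns beta eps Pb (o.1, o.2))); last by case.
rewrite big_mkcond /=.
rewrite -(pair_big xpredT xpredT (fun (a : option 'I_Ns) (S : {set 'I_Ns}) => if s \in S then outcome_prob sc Ns beta eps Pb (a, S) else 0)) /=.
rewrite (bigD1 None) //= big1 ?add0r; last first.
  move=> S _; case: ifP => // sS; rewrite /outcome_prob /=.
  case: eqP => [E|]; last by rewrite mulr0.
  by rewrite E inE in sS.
rewrite (reindex_omap Some id) /=; last by case.
apply: eq_big => [j|j _]; first by rewrite eqxx.
rewrite /outcome_prob /=.
rewrite (eq_bigr (fun S => PW Pb j * (if S \in [set S : {set 'I_Ns} | (S \subset avail Ns j) && (#|S| == nframes sc Ns beta eps j) & s \in S] then (#|placements sc Ns beta eps j|%:R)^-1 else 0))); last first.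
  move=> S _; rewrite /placements !inE.
  by case: (s \in S); rewrite ?andbT ?andbF ?mulr0.
rewrite -mulr_sumr -big_mkcond /= sumr_const.
congr (_ * _).
have hb2 := nframes_bnd sc Ns beta eps j hb.
rewrite /Nav -(card_avail Ns j) in hb2 *.
have <- : (s \in avail Ns j) = (j <= s)%N by rewrite inE.
by rewrite -ratio // -[LHS]mulr_natl.
Qed.

Lemma minlem (R : realFieldType) (b N : nat) : (0 < N)%N ->
  Num.min (b%:R / N%:R : R) 1 = (minn b N)%:R / N%:R.
Proof.
move=> hN; have hN' : 0 < N%:R :> R by rewrite ltr0n.
case: (leqP b N) => hbN.
  apply/min_idPl.
  by rewrite ler_pdivrMr // mul1r ler_nat.

rewrite divff ?gt_eqF //; apply/min_idPr.
by rewrite ler_pdivlMr // mul1r ler_nat ltnW.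
Qed.

Lemma termwise (R : realFieldType) sc Ns beta eps (Pb : R) (s : 'I_Ns) (j : 'I_Ns) :
  (0 < beta)%N ->
  let L : int := (Ns%:Z - beta%:Z - (y_of sc eps)%:Z)%R in
  PW Pb j * (if (j <= s)%N then (nframes sc Ns beta eps j)%:R / (Nav Ns j)%:R else 0)
  = (if (j%:Z <= Num.min L s%:Z)%R then
       ((beta + r_j sc Ns beta eps j)%:R / (Nav Ns j)%:R) * PW Pb j else 0)
  + (if (L + 1 <= j%:Z)%R && (j <= s)%N then
       Num.min (beta%:R / (Nav Ns j)%:R) 1 * PW Pb j else 0).
Proof.
move=> hb L.
have hj := ltn_ord j.
have hN : (0 < Nav Ns j)%N by rewrite /Nav; lia.
rewrite le_min.
case: (leqP j s) => hjs; last first.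
  rewrite andbF; have -> : (j%:Z <= s%:Z)%R = false by lia.
  by rewrite andbF mulr0 addr0.
rewrite andbT; have -> : (j%:Z <= s%:Z)%R = true by lia.
rewrite andbT.
case: (boolP (j%:Z <= L)%R) => hjL.
  have -> : (L + 1 <= j%:Z)%R = false by lia.
  rewrite addr0 mulrC.
  have -> : nframes sc Ns beta eps j = (beta + r_j sc Ns beta eps j)%N.
    move: hjL; rewrite /L; clear L; rewrite /nframes /r_j /Nav; case: sc => /=; repeat case: ifP; lia.
  by [].
have -> : (L + 1 <= j%:Z)%R = true by lia.
rewrite add0r minlem // mulrC.
have -> : nframes sc Ns beta eps j = minn beta (Nav Ns j).
  move: hjL; rewrite /L; clear L; rewrite /nframes /r_j /Nav; case: sc => /=; repeat case: ifP; lia.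
by [].
Qed.

Theorem lemma2 (R : realFieldType) (sc : scheme) (Ns beta eps : nat) (Pb : R)
  (hNs : (0 < Ns)%N) (hbeta : (0 < beta)%N) (heps : (0 < eps)%N)
  (hPb0 : 0 < Pb) (hPb1 : Pb <= 1) (s : 'I_Ns) :
  P_tx sc Ns beta eps Pb s = P_col sc Ns beta eps Pb s.
Proof.
rewrite Ptx_eq // /P_col.
set L : int := (Ns%:Z - beta%:Z - (y_of sc eps)%:Z)%R.
have -> : (if (L < s%:Z)%R then 1 else 0) * \sum_(j < Ns | (L + 1 <= j%:Z)%R && (j <= s)%N)
     Num.min (beta%:R / (Nav Ns j)%:R) 1 * PW Pb j
   = \sum_(j < Ns | (L + 1 <= j%:Z)%R && (j <= s)%N)
     Num.min (beta%:R / (Nav Ns j)%:R) 1 * PW Pb j.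
  case: ifP => h; first by rewrite mul1r.
  rewrite big_pred0 ?mulr0 // => j.
  apply/negbTE/negP => /andP[h1 h2].
  move/negbT: h; rewrite -leNgt; lia.
rewrite [X in _ = X + _]big_mkcond [X in _ = _ + X]big_mkcond -big_split /=.
apply: eq_bigr => j _.
exact: termwise.
Qed.
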